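(* Order $S_n$ by $v\le w$ iff $\iota_k(v)\le\iota_k(w)$ for all $k$. Then $w\in S_n$ covers $v\in S_n$ in this order if and only if there exist $i<k$ such that: $w(j)=v(j)$ for all $j\notin\{i,k\}$; $v(i)=w(k)<w(i)=v(k)$; and $w(j)<w(k)$ for every $i<j<k$.
   Context: Permutations are written in one-line notation. The inversion table of $w\in S_n$ is $\iota(w)=(\iota_1(w),\dots,\iota_n(w))$ with $\iota_k(w)=\#\{i<w^{-1}(k):w(i)>k\}$. *)

(* Defs.v *)
From mathcomp Require Import all_boot all_order all_fingroup.
Set Implicit Arguments. Unset Strict Implicit. Unset Printing Implicit Defensive.
Import GroupScope.

(* Values and positions are 0-based: 'I_n = {0,...,n-1} (a shift of {1..n}),
   which preserves all comparisons used below. *)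

Definition inv_entry (n : nat) (w : 'S_n) (k : 'I_n) : nat :=
  #|[set i : 'I_n | (i < (w^-1)%g k)%N && (k < w i)%N]|.

Definition inv_le (n : nat) (v w : 'S_n) : Prop :=
  forall k : 'I_n, (inv_entry v k <= inv_entry w k)%N.

Definition inv_lt (n : nat) (v w : 'S_n) : Prop := inv_le v w /\ v <> w.

Definition inv_covers (n : nat) (v w : 'S_n) : Prop :=
  inv_lt v w /\ ~ (exists u : 'S_n, inv_lt v u /\ inv_lt u w).

(* Main.v *)
Require Import Defs.
From mathcomp Require Import all_boot all_order all_fingroup.
From mathcomp Require Import zify.
Set Warnings "-notation-overridden".
Set Implicit Arguments. Unset Strict Implicit.

Lemma inv_entry_alt n (v : 'S_n) (k : 'I_n) :
  inv_entry v k = #|[set i : 'I_n | (i < (v^-1)%g k)%N && ~~ (v i < k)%N]|.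
Proof.
rewrite /inv_entry; apply: eq_card => i; rewrite !inE.
case: ltnP => //= Hi.
have Hne : v i != k.
  apply/eqP => E; move: Hi; rewrite -E permK ltnn //.
by rewrite -leqNgt ltn_neqAle eq_sym Hne.
Qed.

Lemma key_lt n (v w : 'S_n) (k : 'I_n) :
  (forall i, (v i < k)%N = (w i < k)%N) ->
  ((v^-1)%g k < (w^-1)%g k)%N -> (inv_entry v k < inv_entry w k)%N.
Proof.
move=> H Hlt; rewrite !inv_entry_alt.
have -> : [set i : 'I_n | (i < (v^-1)%g k)%N && ~~ (v i < k)%N]
        = [set i : 'I_n | (i < (v^-1)%g k)%N && ~~ (w i < k)%N].
  by apply/setP => i; rewrite !inE H.
apply: proper_card; apply/properP; split.
  apply/subsetP => i; rewrite !inE => /andP[h1 h2]; rewrite h2 andbT.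
  exact: ltn_trans h1 Hlt.
exists ((v^-1)%g k); rewrite !inE ?ltnn //.
by rewrite Hlt -H permKV ltnn.
Qed.

Lemma inv_inj n (v w : 'S_n) :
  (forall k, inv_entry v k = inv_entry w k) -> v = w.
Proof.
move=> Heq.
suff H : forall m (j : 'I_n), (j < m)%N -> (v^-1)%g j = (w^-1)%g j.
  apply: invg_inj; apply/permP => j; exact: (H n j (ltn_ord j)).
elim=> [//|m IH] j; rewrite ltnS leq_eqVlt => /orP[/eqP Ej|]; last exact: IH.
have Hs : forall (a b : 'S_n), (forall x : 'I_n, (x < m)%N -> (a^-1)%g x = (b^-1)%g x) ->
   forall i, (a i < j)%N -> (b i < j)%N.
  move=> a b Hab i; rewrite Ej => Hi.
  have := Hab (a i) Hi; rewrite permK => ->; by rewrite permKV.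
have H1 : forall i, (v i < j)%N = (w i < j)%N.
  move=> i; apply/idP/idP; first exact: Hs.
  by apply: Hs => x hx; rewrite IH.
case: (ltngtP ((v^-1)%g j) ((w^-1)%g j)) => [h|h|h].
- by have := key_lt H1 h; rewrite Heq ltnn.
- have H2 : forall i, (w i < j)%N = (v i < j)%N by move=> i; rewrite H1.
  by have := key_lt H2 h; rewrite Heq ltnn.
- exact: val_inj.
Qed.

Lemma swap_entries n (v w : 'S_n) (p q : 'I_n) :
  (p < q)%N ->
  (forall j, j != p -> j != q -> w j = v j) ->
  w q = v p -> w p = v q -> (v p < v q)%N ->
  (forall j : 'I_n, (p < j)%N -> (j < q)%N -> (w j < v p)%N) ->
  inv_entry w (v p) = (inv_entry v (v p)).+1 /\
  forall b, b != v p -> inv_entry w b = inv_entry v b.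
Proof.
move=> pq Hj wq wp vpq Hbt.
have qp : q != p by rewrite neq_ltn pq orbT.
have wt : forall i, w i = v (tperm p q i).
  move=> i; case: (tpermP p q i) => [->|->|/eqP h1 /eqP h2]; rewrite ?wp ?wq //.
  by rewrite Hj // eq_sym.
have iw : forall i x, v i = x -> (w^-1)%g x = tperm p q i.
  move=> i x <-; apply: (@perm_inj _ w); rewrite permKV wt tpermK //.
split.
  rewrite /inv_entry (iw p) // tpermL permK.
  have -> : [set i : 'I_n | (i < q)%N && (v p < w i)%N]
          = p |: [set i : 'I_n | (i < p)%N && (v p < v i)%N].
    apply/setP => i; rewrite !inE.
    case: (eqVneq i p) => [->|ip]; first by rewrite pq wp vpq.
    case: (eqVneq i q) => [->|iq].
      by rewrite ltnn /= ltnNge ltnW.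
    rewrite Hj //=; case: (ltngtP i p) => [h|h|h].
    - by rewrite (ltn_trans h pq).
    - case: (ltnP i q) => //= h2; by rewrite ltnNge ltnW // -(Hj i) // Hbt.
    - by move: ip; rewrite (val_inj h) eqxx.
  by rewrite cardsU1 inE ltnn.
move=> b hb.
case: (eqVneq b (v q)) => [->|hbq].
  rewrite /inv_entry (iw q) // tpermR !permK.
  apply: eq_card => i; rewrite !inE.
  case: (eqVneq i p) => [->|ip]; first by rewrite ltnn pq /= ltnNge ltnW.
  case: (eqVneq i q) => [->|iq]; first by rewrite ltnn ltnNge ltnW.
  rewrite Hj //; case: (ltngtP i p) => [h|h|h].
  - by rewrite (ltn_trans h pq).
  - case: (ltnP i q) => //= h2; rewrite ltnNge ltnW //.
    by rewrite -(Hj i) // (ltn_trans (Hbt _ h h2) vpq).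
  - by move: ip; rewrite (val_inj h) eqxx.
set r := (v^-1)%g b.
have vr : v r = b by rewrite permKV.
have rp : r != p by apply/eqP => E; move: hb; rewrite -vr E eqxx.
have rq : r != q by apply/eqP => E; move: hbq; rewrite -vr E eqxx.
rewrite /inv_entry (iw r) // tpermD 1?(eq_sym _ r) // -/r.
idtac.
case: (leqP r q) => qr; last first.
  have pr : (p < r)%N := ltn_trans pq qr.
  rewrite -[in RHS](card_preimset _ (@perm_inj _ (tperm p q))).
  apply: eq_card => i; rewrite !inE wt -/r.
  case: (tpermP p q i) => [->|->|] //; by rewrite pr qr.
apply: eq_card => i; rewrite !inE.
case: (eqVneq i q) => [->|iq].
  by rewrite ltnNge qr.
case: (eqVneq i p) => [->|ip]; last by rewrite Hj.
case: (ltnP p r) => //= prr.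
have br : (b < v p)%N.
  by rewrite -vr -(Hj r) ?Hbt // ltn_neqAle qr andbT.
by rewrite wp (ltn_trans br vpq) br.
Qed.

Lemma card_gt_perm n (v w : 'S_n) (a : 'I_n) :
  #|[set i | (a < w i)%N]| = #|[set i | (a < v i)%N]|.
Proof.
have E : forall s : 'S_n, [set i | (a < s i)%N] = s @^-1: [set j : 'I_n | (a < j)%N].
  by move=> s; apply/setP => i; rewrite !inE.
by rewrite !E !card_preimset //; apply: perm_inj.
Qed.

Theorem proposition3p1 (n : nat) (v w : 'S_n) :
  inv_covers v w <->
  exists i k : 'I_n,
    (i < k)%N /\
    (forall j : 'I_n, j != i -> j != k -> w j = v j) /\
    (v i = w k /\ (w k < w i)%N /\ w i = v k) /\
    (forall j : 'I_n, (i < j)%N -> (j < k)%N -> (w j < w k)%N).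
Proof.
split.
- case=> [[Hle Hne] Hno].
  have [a Ha] : exists a, (inv_entry v a < inv_entry w a)%N.
    case: (pickP (fun a => (inv_entry v a < inv_entry w a)%N)) => [a h|h].
      by exists a.
    exfalso; apply: Hne; apply: inv_inj => k; apply/eqP.
    by rewrite eqn_leq Hle /= leqNgt h.
  set p := (v^-1)%g a.
  have vp : v p = a by rewrite permKV.
  have Hex : exists q : 'I_n, (p < q)%N && (a < v q)%N.
    case: (pickP (fun q : 'I_n => (p < q)%N && (a < v q)%N)) => [q h|h].
      by exists q.
    exfalso.
    have : (inv_entry w a <= inv_entry v a)%N.
      apply: (@leq_trans #|[set i | (a < w i)%N]|).
        apply: subset_leq_card; apply/subsetP => i; rewrite !inE.
        by case/andP.
      rewrite (card_gt_perm v) /inv_entry.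
      apply: subset_leq_card; apply/subsetP => i; rewrite !inE -/p => ai.
      rewrite ai andbT.
      have := h i; rewrite /= ai andbT => /negbT; rewrite -leqNgt leq_eqVlt.
      case/orP => // /eqP E.
      by move: ai; rewrite (val_inj E) vp ltnn.
    by rewrite leqNgt Ha.
  case: Hex => q0 Pq0.
  case: (@arg_minnP _ q0 (fun q : 'I_n => (p < q)%N && (a < v q)%N) (fun q : 'I_n => nat_of_ord q) Pq0) => q /andP[pq aq] Hmin.
  set u := (tperm p q * v)%g.
  have uE : forall i, u i = v (tperm p q i) by move=> i; rewrite permM.
  have pq' : q != p by rewrite neq_ltn pq orbT.
  have Hbtw : forall j : 'I_n, (p < j)%N -> (j < q)%N -> (v j < a)%N.
    move=> j h1 h2.
    have : ~~ ((p < j)%N && (a < v j)%N).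
      by apply/negP => /Hmin; rewrite leqNgt h2.
    rewrite h1 /= -leqNgt leq_eqVlt; case/orP => // /eqP E.
    have : j = p by apply: (@perm_inj _ v); apply: val_inj; rewrite /= E vp.
    by move=> Ej; move: h1; rewrite Ej ltnn.
  have Hbtw' : forall j : 'I_n, (p < j)%N -> (j < q)%N -> (u j < v p)%N.
    move=> j h1 h2; rewrite uE tpermD ?vp ?Hbtw //.
      by rewrite neq_ltn h1.
    by rewrite neq_ltn h2 orbT.
  have [Hua Hub] := @swap_entries n v u p q pq
    (fun j h1 h2 => ltac:(by rewrite uE tpermD // eq_sym))
    (ltac:(by rewrite uE tpermR)) (ltac:(by rewrite uE tpermL))
    (ltac:(by rewrite vp))
    Hbtw'.
  rewrite vp in Hua Hub.
  have Hvu : inv_lt v u.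
    split.
      move=> k; case: (eqVneq k a) => [->|ka]; first by rewrite Hua.
      by rewrite Hub.
    by move=> E; move: Hua; rewrite -E => /n_Sn.
  have Huw : inv_le u w.
    move=> k; case: (eqVneq k a) => [->|ka]; first by rewrite Hua.
    by rewrite Hub // Hle.
  have Euw : u = w.
    case: (eqVneq u w) => // ne; exfalso; apply: Hno; exists u; split => //.
    by split => // E; rewrite E eqxx in ne.
  rewrite -Euw; exists p, q; split => //.
  split; first by move=> j h1 h2; rewrite uE tpermD // eq_sym.
  split.
    rewrite !uE tpermL tpermR; split => //; split => //; by rewrite vp.
  move=> j h1 h2; rewrite !uE tpermR tpermD ?vp.
  + exact: Hbtw.
  + by rewrite neq_ltn h1.
  + by rewrite neq_ltn h2 orbT.
- case=> i [k [ik [Hj [[vi [wki wi]] Hbt]]]].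
  have [Hwa Hwb] := @swap_entries n v w i k ik Hj (esym vi) wi
    (ltac:(by rewrite vi -wi)) (fun j h1 h2 => ltac:(by rewrite vi Hbt)).
  have Hle : inv_le v w.
    move=> b; case: (eqVneq b (v i)) => [->|hb]; first by rewrite Hwa.
    by rewrite Hwb.
  split.
    split => // E; move: Hwa; rewrite E; lia.
  case=> u [[Hvu Hneu] [Huw Hneuw]].
  case: (eqVneq (inv_entry u (v i)) (inv_entry v (v i))) => h.
    apply: Hneu; apply: inv_inj => b.
    case: (eqVneq b (v i)) => [->|hb]; first by rewrite h.
    have := Hvu b; have := Huw b; rewrite Hwb //; lia.
  apply: Hneuw; apply: inv_inj => b.
  case: (eqVneq b (v i)) => [->|hb].
    have := Hvu (v i); have := Huw (v i); move: h; rewrite Hwa => /eqP; lia.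
  have := Hvu b; have := Huw b; rewrite Hwb //; lia.
Qed.
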